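(* Let $\Omega\subset\mathbb{R}^3$ be a bounded domain and $N>0$. For all $u,v\in L^4(\Omega)^3$, $$\|F_N(u)\,u\otimes u-F_N(v)\,v\otimes v\|_{L^2}\leqslant 3N\|u-v\|_{L^4}\quad\text{and}\quad\|F_N(u)\,u\otimes u\|_{L^2}\leqslant N\|u\|_{L^4}.$$
   Context: $f_N(r)=\min\{1,N/r\}$ for $r\geqslant0$ (with $f_N(0)=1$), and $F_N(u)=f_N(\|u\|_{L^4(\Omega)^3})$. For $u,v:\Omega\to\mathbb{R}^3$, $u\otimes v$ is the matrix-valued function $(u_iv_j)_{i,j=1}^3$; $L^2$-norms of matrix-valued functions use the Frobenius (Euclidean) norm pointwise. $L^r$ denotes $L^r(\Omega)^3$ (or its matrix analogue). *)

(* Defs.v *)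
From HB Require Import structures.
From mathcomp Require Import all_boot all_order all_algebra.
From mathcomp Require Import all_classical all_reals all_analysis.
Set Implicit Arguments. Unset Strict Implicit. Unset Printing Implicit Defensive.
Import Order.TTheory GRing.Theory Num.Theory.
Import numFieldNormedType.Exports.
Local Open Scope classical_set_scope.
Local Open Scope ring_scope.

Definition R3 (R : realType) := ((R * R) * R)%type.

Definition leb3 (R : realType) :=
  ((@lebesgue_measure R \x @lebesgue_measure R) \x @lebesgue_measure R)%E.

Definition eucl (R : realType) (a : 'rV[R]_3) : R := Num.sqrt (\sum_(i < 3) a 0 i ^+ 2).

Definition tens (R : realType) (a b : 'rV[R]_3) : 'M[R]_3 := \matrix_(i, j) (a 0 i * b 0 j).
Definition frob (R : realType) (A : 'M[R]_3) : R :=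
  Num.sqrt (\sum_(i < 3) \sum_(j < 3) A i j ^+ 2).

Definition LpnormD (R : realType) (D : set (R3 R)) (p : R) (g : R3 R -> R) : \bar R :=
  ((\int[@leb3 R]_(x in D) (`|g x| `^ p)%:E) `^ p^-1)%E.

Definition L4vec (R : realType) (D : set (R3 R)) (u : R3 R -> 'rV[R]_3) : \bar R :=
  LpnormD D 4 (fun x => eucl (u x)).
Definition L2mat (R : realType) (D : set (R3 R)) (A : R3 R -> 'M[R]_3) : \bar R :=
  LpnormD D 2 (fun x => frob (A x)).

Definition inL4 (R : realType) (D : set (R3 R)) (u : R3 R -> 'rV[R]_3) : Prop :=
  (forall i : 'I_3, measurable_fun D (fun x => u x 0 i)) /\ (L4vec D u < +oo)%E.

Definition fN (R : realType) (N r : R) : R := if r == 0 then 1 else Num.min 1 (N / r).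

Definition FN (R : realType) (D : set (R3 R)) (N : R) (u : R3 R -> 'rV[R]_3) : R :=
  fN N (fine (L4vec D u)).

(* Main.v *)
Require Import Defs.
From HB Require Import structures.
From mathcomp Require Import all_boot all_order all_algebra.
From mathcomp Require Import all_classical all_reals all_analysis.
From mathcomp Require Import measurable_realfun.
From mathcomp Require Import ring lra.
Import Order.TTheory GRing.Theory Num.Theory.
Import numFieldNormedType.Exports.
Local Open Scope classical_set_scope.
Local Open Scope ring_scope.

Lemma ballR3 (R : realType) (a b c : R) r :
  ball (((a, b), c) : R3 R) r = (ball a r `*` ball b r) `*` ball c r.
Proof. by []. Qed.

Lemma rat_small {R : realType} {e : R} : 0 < e -> exists r : rat, 0 < @ratr R r < e.
Proof.
move=> e0; have [q] := rat_in_itvoo e0; rewrite in_itv/= => /andP[a b].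
by exists q; rewrite a b.
Qed.

Lemma rat_near {R : realType} (x : R) {e : R} : 0 < e -> exists q : rat, `|x - @ratr R q| < e.
Proof.
move=> e0; have : x < x + e by rewrite ltrDl.
move=> /rat_in_itvoo[q]; rewrite in_itv/= => /andP[a b].
exists q; rewrite distrC ger0_norm ?subr_ge0 ?(ltW a)//.
by rewrite ltrBlDl.
Qed.

Lemma open_meas (R : realType) (O : set (R3 R)) : open O -> measurable O.
Proof.
move=> oO.
pose F := fun (q1 q2 q3 r : rat) =>
  if pselect (0 < @ratr R r /\ ball (((ratr q1, ratr q2), ratr q3) : R3 R) (ratr r) `<=` O)
  then ball (((ratr q1, ratr q2), ratr q3) : R3 R) (ratr r) else set0.
have -> : O = \bigcup_q1 \bigcup_q2 \bigcup_q3 \bigcup_r F q1 q2 q3 r.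
  apply/seteqP; split; last first.
    move=> x [q1 _ [q2 _ [q3 _ [r _ Fx]]]]; move: Fx; rewrite /F.
    by case: pselect => // -[_ H] /H.
  move=> x Ox.
  have [e e0 exO] : exists2 e : R, 0 < e & ball x e `<=` O.
    by apply/nbhs_ballP; exact: oO.
  have [r /andP[r0 re]] := rat_small (divr_gt0 e0 (ltr0n _ 2)).
  case: x Ox exO => [[x1 x2] x3] Ox exO.
  have [q1 h1] := rat_near x1 r0.
  have [q2 h2] := rat_near x2 r0.
  have [q3 h3] := rat_near x3 r0.
  have xq : ball (((ratr q1, ratr q2), ratr q3) : R3 R) (ratr r) ((x1, x2), x3).
    rewrite ballR3; split; [split|]; rewrite /ball/= distrC; by [].
  exists q1 => //; exists q2 => //; exists q3 => //; exists r => //.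
  rewrite /F; case: pselect => // -[]; split => // y qy.
  apply: exO.
  have := ball_triangle (ball_sym xq) qy.
  apply: le_ball.
  have : ratr r + ratr r < e.
    by rewrite -(@ltr_pM2r _ (2^-1))// mulrDl -splitr.
  by move/ltW.
apply: bigcupT_measurable_rat => q1.
apply: bigcupT_measurable_rat => q2.
apply: bigcupT_measurable_rat => q3.
apply: bigcupT_measurable_rat => r.
rewrite /F; case: pselect => H /=; last exact: measurable0.
rewrite ballR3; apply: measurableX; [apply: measurableX|]; exact: measurable_ball.
Qed.

Section LN.
Context {d} {T : measurableType d} {R : realType}.
Variable mu : {measure set T -> \bar R}.
Local Open Scope ereal_scope.
Local Notation N p f := (Lnorm mu (p%:E) (EFin \o f)).

Lemma LnE p (f : T -> R) : N p f = (\int[mu]_x (`|f x| `^ p)%:E) `^ p^-1.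
Proof.
by rewrite unlock /=.
Qed.

Lemma mpow (f : T -> R) p : measurable_fun setT f ->
  measurable_fun setT (fun x => (`|f x| `^ p)%:E).
Proof.
move=> mf; apply/measurable_EFinP.
apply: (@measurableT_comp _ _ _ _ _ _ (@powR R ^~ p)); first exact: measurable_powR.
exact: measurableT_comp.
Qed.

Lemma int_ge0 (f : T -> R) p : 0 <= \int[mu]_x (`|f x| `^ p)%:E.
Proof. by apply: integral_ge0 => x _; rewrite lee_fin powR_ge0. Qed.

Lemma L_mono p (f g : T -> R) : (0 < p)%R ->
  measurable_fun setT f -> measurable_fun setT g ->
  (forall x, `|f x| <= `|g x|)%R -> N p f <= N p g.
Proof.
move=> p0 mf mg fg; rewrite !LnE.
apply: gt0_ler_poweR; first by rewrite invr_ge0 ltW.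
all: try by rewrite in_itv/= int_ge0 leey.
apply: (@ge0_le_integral _ _ _ mu setT measurableT).
- by move=> x _; rewrite lee_fin powR_ge0.
- exact: mpow.
- exact: mpow.
by move=> x _; rewrite lee_fin; apply: ge0_ler_powR => //; rewrite ?nnegrE ?ltW.
Qed.

Lemma L_scale p (c : R) (f : T -> R) : (0 < p)%R -> (0 <= c)%R ->
  measurable_fun setT f -> N p (fun x => c * f x)%R = c%:E * N p f.
Proof.
move=> p0 c0 mf; rewrite !LnE.
under eq_integral do rewrite normrM powRM// EFinM.
rewrite ge0_integralZl_EFin//; last first.
  exact: mpow.
rewrite poweRM ?lee_fin ?powR_ge0 ?int_ge0//.
by rewrite poweR_EFin -powRrM mulfV ?gt_eqF// powRr1 ?normr_ge0// ger0_norm.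
Qed.

Lemma L_holder (f g : T -> R) : measurable_fun setT f -> measurable_fun setT g ->
  N 2 (fun x => f x * g x)%R <= N 4 f * N 4 g.
Proof.
move=> mf mg.
have h := @hoelder d T R mu (fun x => f x ^+ 2)%R (fun x => g x ^+ 2)%R 2 2
  (measurable_funX _ mf) (measurable_funX _ mg) (ltr0Sn _ 1) (ltr0Sn _ 1).
have /h {h} : (2^-1 + 2^-1 = 1 :> R)%R by rewrite [RHS](splitr 1) mul1r.
set X := \int[mu]_x (`|f x| `^ 4)%:E.
set Y := \int[mu]_x (`|g x| `^ 4)%:E.
set Z := \int[mu]_x (`|f x * g x| `^ 2)%:E.
have h1 : Lnorm mu 1 (EFin \o (fun x => f x ^+ 2) \* (fun x => g x ^+ 2))%R = Z.
  rewrite Lnorm1; apply: eq_integral => x _.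
  rewrite /= powR_mulrn ?normr_ge0//; congr EFin.
  by rewrite -normrX exprMn.
have h2 : forall F : T -> R, N 2 (fun x => F x ^+ 2)%R = (\int[mu]_x (`|F x| `^ 4)%:E) `^ 2^-1.
  move=> F; rewrite LnE; congr (_ `^ _); apply: eq_integral => x _; congr EFin.
  rewrite normrX -powR_mulrn ?normr_ge0// -powRrM; congr powR.
  by rewrite -natrM.
rewrite h1 !h2 -/X -/Y => hZ.
rewrite !LnE -/X -/Y -/Z.
have X0 : 0 <= X by apply: int_ge0.
have Y0 : 0 <= Y by apply: int_ge0.
have Z0 : 0 <= Z by apply: int_ge0.
apply: (@le_trans _ _ ((X `^ 2^-1 * Y `^ 2^-1) `^ 2^-1)).
  apply: gt0_ler_poweR => //.
  - by rewrite in_itv/= Z0 leey.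
  - by rewrite in_itv/= mule_ge0 ?poweR_ge0// leey.
rewrite poweRM ?poweR_ge0// -!poweRrM.
have -> : (2^-1 * 2^-1 = 4^-1 :> R)%R by rewrite -invfM -natrM.
by [].
Qed.
End LN.

Section Alg.
Variable R : realType.

Lemma CS (I : finType) (a b : I -> R) :
  (\sum_i a i * b i) ^+ 2 <= (\sum_i a i ^+ 2) * (\sum_i b i ^+ 2).
Proof.
have S0 : 0 <= \sum_i \sum_j (a i * b j - a j * b i) ^+ 2.
  by apply: sumr_ge0 => i _; apply: sumr_ge0 => j _; exact: sqr_ge0.
set A := \sum_i a i ^+ 2; set B := \sum_i b i ^+ 2; set C := \sum_i a i * b i.
have E : \sum_i \sum_j (a i * b j - a j * b i) ^+ 2 = A * B + B * A - 2 * (C * C).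
  rewrite /A /B /C !big_distrlr mulr_sumr -big_split -sumrB /=.
  apply: eq_bigr => i _; rewrite mulr_sumr -big_split -sumrB.
  by apply: eq_bigr => j _ /=; ring.
rewrite E in S0.
rewrite expr2; nra.
Qed.

Lemma sq_tri (I : finType) (a b : I -> R) :
  Num.sqrt (\sum_i (a i + b i) ^+ 2) <=
  Num.sqrt (\sum_i a i ^+ 2) + Num.sqrt (\sum_i b i ^+ 2).
Proof.
set A := \sum_i a i ^+ 2; set B := \sum_i b i ^+ 2; set C := \sum_i a i * b i.
have A0 : 0 <= A by apply: sumr_ge0 => i _; exact: sqr_ge0.
have B0 : 0 <= B by apply: sumr_ge0 => i _; exact: sqr_ge0.
have E : \sum_i (a i + b i) ^+ 2 = A + B + 2 * C.
  rewrite /A /B /C mulr_sumr -!big_split /=; apply: eq_bigr => i _; ring.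
have CC : C <= Num.sqrt A * Num.sqrt B.
  rewrite -sqrtrM //; apply: (le_trans (ler_norm C)).
  by rewrite -sqrtr_sqr; rewrite ler_wsqrtr // CS.
rewrite E -[X in _ <= X]ger0_norm ?addr_ge0 ?sqrtr_ge0 // -sqrtr_sqr.
rewrite ler_wsqrtr // sqrrD !sqr_sqrtr //; nra.
Qed.

Lemma eucl_ge0 (a : 'rV[R]_3) : 0 <= eucl a.
Proof. exact: sqrtr_ge0. Qed.

Lemma eucl0 : eucl (0 : 'rV[R]_3) = 0.
Proof. by rewrite /eucl big1 ?sqrtr0// => i _; rewrite mxE expr0n. Qed.

Lemma euclN (a : 'rV[R]_3) : eucl (- a) = eucl a.
Proof. by rewrite /eucl; congr Num.sqrt; apply: eq_bigr => i _; rewrite mxE sqrrN. Qed.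

Lemma eucl_tri (a b : 'rV[R]_3) : eucl (a + b) <= eucl a + eucl b.
Proof.
rewrite /eucl (eq_bigr (fun i => (a 0 i + b 0 i) ^+ 2)); last by move=> i _; rewrite mxE.
exact: (sq_tri _ (fun i => a 0 i) (fun i => b 0 i)).
Qed.

Lemma frobE (A : 'M[R]_3) : frob A = Num.sqrt (\sum_(p : 'I_3 * 'I_3) A p.1 p.2 ^+ 2).
Proof. by rewrite /frob pair_bigA. Qed.

Lemma frob_ge0 (A : 'M[R]_3) : 0 <= frob A.
Proof. exact: sqrtr_ge0. Qed.

Lemma frob_tri (A B : 'M[R]_3) : frob (A + B) <= frob A + frob B.
Proof.
rewrite !frobE (eq_bigr (fun p => (A p.1 p.2 + B p.1 p.2) ^+ 2)); last by move=> i _; rewrite mxE.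
exact: (sq_tri _ (fun p => A p.1 p.2) (fun p => B p.1 p.2)).
Qed.

Lemma frobN (A : 'M[R]_3) : frob (- A) = frob A.
Proof.
rewrite /frob; congr Num.sqrt; apply: eq_bigr => i _; apply: eq_bigr => j _.
by rewrite mxE sqrrN.
Qed.

Lemma frobZ c (A : 'M[R]_3) : frob (c *: A) = `|c| * frob A.
Proof.
rewrite /frob -sqrtr_sqr -sqrtrM ?sqr_ge0//; congr Num.sqrt.
rewrite mulr_sumr; apply: eq_bigr => i _; rewrite mulr_sumr; apply: eq_bigr => j _.
by rewrite mxE exprMn.
Qed.

Lemma frob_tens (a b : 'rV[R]_3) : frob (tens a b) = eucl a * eucl b.
Proof.
rewrite /frob /eucl -sqrtrM ?sumr_ge0//; last by move=> i _; exact: sqr_ge0.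
congr Num.sqrt; rewrite big_distrlr /=; apply: eq_bigr => i _; apply: eq_bigr => j _.
by rewrite mxE exprMn.
Qed.

Lemma decomp (U V : R) (u v : 'rV[R]_3) :
  U *: tens u u - V *: tens v v =
  U *: tens (u - v) u + U *: tens v (u - v) + (U - V) *: tens v v.
Proof. by apply/matrixP => i j; rewrite !mxE; ring. Qed.

Lemma pt_bound (U V : R) (u v : 'rV[R]_3) : 0 <= U ->
  frob (U *: tens u u - V *: tens v v) <=
  U * (eucl (u - v) * eucl u) + U * (eucl v * eucl (u - v)) + `|U - V| * (eucl v * eucl v).
Proof.
move=> U0; rewrite decomp.
apply: (le_trans (frob_tri _ _)); rewrite frobZ frob_tens lerD2r.
apply: (le_trans (frob_tri _ _)).
by rewrite !frobZ !frob_tens ger0_norm.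
Qed.
End Alg.

Section Real.
Variable R : realType.
Variable N : R.
Hypothesis N0 : 0 < N.

Lemma fNE (r : R) : 0 <= r -> fN N r = if r <= N then 1 else N / r.
Proof.
move=> r0; rewrite /fN; have [->|rn0] := eqVneq r 0; first by rewrite ltW.
have rp : 0 < r by rewrite lt_def rn0 r0.
case: ifPn => rN.
  by rewrite min_l // ler_pdivlMr // mul1r.
rewrite -ltNge in rN.
by rewrite min_r // ler_pdivrMr // mul1r ltW.
Qed.

Lemma fN_rN (r : R) : 0 <= r -> ~~ (r <= N) -> N / r * r = N.
Proof.
move=> r0; rewrite -ltNge => rN; rewrite mulfVK // gt_eqF // (lt_trans N0 rN) //.
Qed.

Lemma fN_ge0 r : 0 <= r -> 0 <= fN N r.
Proof.
move=> r0; rewrite fNE //; case: ifPn => // rN.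
by rewrite divr_ge0 // ltW.
Qed.

Lemma fN_mul r : 0 <= r -> fN N r * r <= N.
Proof.
move=> r0; rewrite fNE //; case: ifPn => rN; first by rewrite mul1r.
by rewrite fN_rN.
Qed.

Lemma fN_anti a b : 0 <= b -> b <= a -> fN N a <= fN N b.
Proof.
move=> b0 ba; have a0 : 0 <= a by apply: le_trans ba.
rewrite !fNE //.
case: ifPn => aN; case: ifPn => bN.
- by [].
- by have := le_trans ba aN; rewrite (negbTE bN).
- rewrite -ltNge in aN.
  by rewrite ler_pdivrMr ?mul1r ?ltW// (lt_trans N0 aN).
- rewrite -ltNge in aN; rewrite -ltNge in bN.
  have b0' : 0 < b by apply: lt_trans bN.
  have a0' : 0 < a by apply: lt_le_trans ba.
  by rewrite ler_pM2l // lef_pV2.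
Qed.

Lemma fN_diff a b : 0 <= b -> b <= a -> (fN N b - fN N a) * b ^+ 2 <= N * (a - b).
Proof.
move=> b0 ba; have a0 : 0 <= a by apply: le_trans ba.
rewrite !fNE //.
case: ifPn => bN; case: ifPn => aN.
- by rewrite subrr mul0r mulr_ge0 ?subr_ge0 // ltW.
- have e := fN_rN _ a0 aN; rewrite -ltNge in aN.
  set t := N / a in e *.
  have a0' : 0 < a by apply: lt_trans aN.
  rewrite -(ler_pM2l a0').
  have -> : a * ((1 - t) * b ^+ 2) = (a - N) * b ^+ 2.
    by rewrite -e; ring.
  have h1 : (a - N) * b ^+ 2 <= (a - N) * (b * N).
    apply: ler_wpM2l; first by rewrite subr_ge0 ltW.
    by rewrite expr2; apply: ler_wpM2l.
  apply: (le_trans h1).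
  have h2 : (a - N) * b <= a * (a - b) by nra.
  nra.
- by have := le_trans ba aN; rewrite (negbTE bN).
- have e1 := fN_rN _ a0 aN; have e2 := fN_rN _ b0 bN.
  rewrite -ltNge in aN; rewrite -ltNge in bN.
  set t := N / a in e1 *; set s := N / b in e2 *.
  have a0' : 0 < a by apply: lt_trans aN.
  have b0' : 0 < b by apply: lt_trans bN.
  rewrite -(ler_pM2l a0').
  have -> : a * ((s - t) * b ^+ 2) = N * b * (a - b).
    have -> : a * ((s - t) * b ^+ 2) = (s * b) * a * b - (t * a) * b ^+ 2 by ring.
    by rewrite e1 e2; ring.
  rewrite mulrA (mulrC a N); apply: ler_wpM2r; first by rewrite subr_ge0.
  by apply: ler_wpM2l => //; exact: ltW.
Qed.

Lemma final a b d : 0 <= b -> b <= a -> a - b <= d -> 0 <= d ->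
  fN N a * (d * a) + fN N a * (b * d) + `|fN N a - fN N b| * (b * b) <= 3 * N * d.
Proof.
move=> b0 ba abd d0; have a0 : 0 <= a by apply: le_trans ba.
have h1 := fN_mul _ a0; have h2 := fN_diff _ _ b0 ba; have h3 := fN_anti _ _ b0 ba.
have h4 := fN_ge0 _ a0.
rewrite ler0_norm ?subr_le0 // opprB.
rewrite expr2 in h2.
set U := fN N a in h1 h2 h3 h4 *; set V := fN N b in h2 h3 *.
have k1 : U * a * d <= N * d by apply: ler_wpM2r.
have k2 : U * b * d <= U * a * d.
  by apply: ler_wpM2r => //; apply: ler_wpM2l.
have k3 : N * (a - b) <= N * d by apply: ler_wpM2l => //; exact: ltW.
have -> : U * (d * a) + U * (b * d) + (V - U) * (b * b) =
  U * a * d + U * b * d + (V - U) * (b * b) by ring.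
lra.
Qed.
End Real.

Section Main.
Variable R : realType.
Local Notation Nn p f := (Lnorm (@leb3 R) (p%:E) (EFin \o f)).

Definition pat (O : set (R3 R)) (u : R3 R -> 'rV[R]_3) x : 'rV[R]_3 :=
  if x \in O then u x else 0.

Lemma conv (D : set (R3 R)) p (h h' : R3 R -> R) : 0 < p ->
  (forall x, h' x = if x \in D then h x else 0) ->
  LpnormD D p h = Nn p h'.
Proof.
move=> p0 hh; rewrite LnE /LpnormD; congr (_ `^ _)%E.
rewrite [LHS]integral_mkcond.
apply: eq_integral => x _; rewrite /patch hh; case: ifP => _ //.
by rewrite normr0 powR0 ?gt_eqF.
Qed.

Lemma mfrob (M : R3 R -> 'M[R]_3) :
  (forall i j, measurable_fun setT (fun x => M x i j)) ->
  measurable_fun setT (fun x => frob (M x)).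
Proof.
move=> mM; rewrite /frob.
apply: (measurableT_comp (continuous_measurable_fun (@sqrt_continuous R))).
apply: measurable_sum => i; apply: measurable_sum => j.
exact: measurable_funX.
Qed.

Lemma meucl (w : R3 R -> 'rV[R]_3) :
  (forall i, measurable_fun setT (fun x => w x 0 i)) ->
  measurable_fun setT (fun x => eucl (w x)).
Proof.
move=> mw; rewrite /eucl.
apply: (measurableT_comp (continuous_measurable_fun (@sqrt_continuous R))).
apply: measurable_sum => i; exact: measurable_funX.
Qed.

Lemma mpat (O : set (R3 R)) (mO : measurable O) u : inL4 O u ->
  forall i, measurable_fun setT (fun x => pat O u x 0 i).
Proof.
move=> [hu _] i.
rewrite (_ : (fun x => pat O u x 0 i) = ((fun x => u x 0 i) \_ O)).
  exact/(measurable_restrictT _ mO).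
apply/funext => x; rewrite /patch /pat; case: ifP => _ //.
by rewrite mxE.
Qed.


Lemma tens00 : tens (0 : 'rV[R]_3) 0 = 0.
Proof. by apply/matrixP => i j; rewrite !mxE mul0r. Qed.

Lemma frob0 : frob (0 : 'M[R]_3) = 0.
Proof.
rewrite /frob big1 ?sqrtr0 // => i _; rewrite big1 // => j _.
by rewrite mxE expr0n.
Qed.

Lemma frob_zero (U V : R) : frob (U *: tens (0 : 'rV[R]_3) 0 - V *: tens 0 0) = 0.
Proof. by rewrite tens00 scaler0 scaler0 subr0 frob0. Qed.

Lemma mentry (U V : R) (a b : R3 R -> 'rV[R]_3) :
  (forall i, measurable_fun setT (fun x => a x 0 i)) ->
  (forall i, measurable_fun setT (fun x => b x 0 i)) ->
  forall i j, measurable_fun setT (fun x => (U *: tens (a x) (a x) - V *: tens (b x) (b x)) i j).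
Proof.
move=> ma mb i j.
rewrite (_ : (fun x => _) = (fun x => U * (a x 0 i * a x 0 j) - V * (b x 0 i * b x 0 j))).
  apply: measurable_funB; apply: measurable_funM; try exact: measurable_cst;
  exact: measurable_funM.
by apply/funext => x; rewrite !mxE.
Qed.

Lemma mentry1 (U : R) (a : R3 R -> 'rV[R]_3) :
  (forall i, measurable_fun setT (fun x => a x 0 i)) ->
  forall i j, measurable_fun setT (fun x => (U *: tens (a x) (a x)) i j).
Proof.
move=> ma i j.
rewrite (_ : (fun x => _) = (fun x => U * (a x 0 i * a x 0 j))).
  apply: measurable_funM; first exact: measurable_cst.
  exact: measurable_funM.
by apply/funext => x; rewrite !mxE.
Qed.

Lemma fin_of (X : \bar R) : (0 <= X)%E -> (X < +oo)%E -> X = (fine X)%:E.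
Proof. by move=> X0 Xoo; rewrite fineK // ge0_fin_numE. Qed.

Lemma key (O : set (R3 R)) (mO : measurable O) (N : R) (hN : 0 < N)
  (u v : R3 R -> 'rV[R]_3) :
  inL4 O u -> inL4 O v -> fine (L4vec O v) <= fine (L4vec O u) ->
  (L2mat O (fun x => (FN O N u *: tens (u x) (u x) - FN O N v *: tens (v x) (v x))%R)
     <= (3 * N)%R%:E * L4vec O (fun x => (u x - v x)%R))%E.
Proof.
move=> hu hv hab.
set U := FN O N u; set V := FN O N v.
set u' := pat O u; set v' := pat O v.
have mu' := @mpat O mO u hu; have mv' := @mpat O mO v hv.
have md : forall i, measurable_fun setT (fun x => (u' x - v' x) 0 i).
  move=> i; rewrite (_ : (fun x => _) = (fun x => u' x 0 i - v' x 0 i)).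
    exact: measurable_funB.
  by apply/funext => x; rewrite !mxE.
set eu := fun x => eucl (u' x); set ev := fun x => eucl (v' x).
set ed := fun x => eucl (u' x - v' x).
have meu : measurable_fun setT eu := meucl _ mu'.
have mev : measurable_fun setT ev := meucl _ mv'.
have med : measurable_fun setT ed := meucl _ md.
have hA : L4vec O u = Nn 4 eu.
  by apply: conv => // x; rewrite /eu /u' /pat; case: ifP => _ //; exact: eucl0.
have hB : L4vec O v = Nn 4 ev.
  by apply: conv => // x; rewrite /ev /v' /pat; case: ifP => _ //; exact: eucl0.
have hD : L4vec O (fun x => u x - v x) = Nn 4 ed.
  apply: conv => // x; rewrite /ed /u' /v' /pat; case: ifP => _ //.
  by rewrite subr0 eucl0.
have hL : L2mat O (fun x => U *: tens (u x) (u x) - V *: tens (v x) (v x)) =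
   Nn 2 (fun x => frob (U *: tens (u' x) (u' x) - V *: tens (v' x) (v' x))).
  rewrite /L2mat; apply: (@conv O 2) => // x.
  rewrite /u' /v' /pat; case: (x \in O); first exact: erefl.
  exact: frob_zero.
rewrite hL hD.
have A0 : (0 <= Nn 4 eu)%E by apply: Lnorm_ge0.
have B0 : (0 <= Nn 4 ev)%E by apply: Lnorm_ge0.
have D0 : (0 <= Nn 4 ed)%E by apply: Lnorm_ge0.
have Aa := fin_of _ A0 (ltac:(rewrite -hA; by case: hu)).
have Bb := fin_of _ B0 (ltac:(rewrite -hB; by case: hv)).
set a := fine (Nn 4 eu) in Aa; set b := fine (Nn 4 ev) in Bb.
have a0 : 0 <= a by rewrite fine_ge0.
have b0 : 0 <= b by rewrite fine_ge0.
have UE : U = fN N a by rewrite /U /FN hA.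
have VE : V = fN N b by rewrite /V /FN hB.
rewrite hA hB -/a -/b in hab.
have U0 : 0 <= U by rewrite UE; exact: (@fN_ge0 R N hN a a0).
have AD : (Nn 4 eu <= Nn 4 ed + Nn 4 ev)%E.
  have m4 : (1 <= 4 :> R) by rewrite ler1n.
  have MK := minkowski_EFin (leb3 (R:=R)) med mev m4.
  apply: le_trans; last exact: MK.
  apply: (L_mono (leb3 (R:=R)) _ _ _ _ meu); first by [].
  - exact: measurable_funD.
  - move=> x; rewrite !ger0_norm ?addr_ge0 ?eucl_ge0 //.
    have := eucl_tri R (u' x - v' x) (v' x); by rewrite subrK.
set g1 := fun x => U * (ed x * eu x).
set g2 := fun x => U * (ev x * ed x).
set g3 := fun x => `|U - V| * (ev x * ev x).
have mg1 : measurable_fun setT g1.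
  by apply: measurable_funM; [exact: measurable_cst | exact: measurable_funM].
have mg2 : measurable_fun setT g2.
  by apply: measurable_funM; [exact: measurable_cst | exact: measurable_funM].
have mg3 : measurable_fun setT g3.
  by apply: measurable_funM; [exact: measurable_cst | exact: measurable_funM].
have step1 : (Nn 2 (fun x => frob (U *: tens (u' x) (u' x) - V *: tens (v' x) (v' x))%R)
    <= Nn 2 (fun x => (g1 x + g2 x + g3 x)%R))%E.
  apply: (L_mono (leb3 (R:=R))) => //.
  - exact: (mfrob _ (mentry U V _ _ mu' mv')).
  - by apply: measurable_funD => //; exact: measurable_funD.
  - move=> x; rewrite ger0_norm ?frob_ge0 // ger0_norm; first exact: pt_bound.
    by rewrite /g1 /g2 /g3 !addr_ge0 // mulr_ge0 // ?mulr_ge0 // ?eucl_ge0.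
have step2 : (Nn 2 (fun x => (g1 x + g2 x + g3 x)%R) <= Nn 2 g1 + Nn 2 g2 + Nn 2 g3)%E.
  have m2 : (1 <= 2 :> R) by rewrite ler1n.
  have MK := minkowski_EFin (leb3 (R:=R)) (measurable_funD mg1 mg2) mg3 m2.
  apply: le_trans; first exact: MK.
  apply: leeD2r.
  exact: (minkowski_EFin (leb3 (R:=R)) mg1 mg2 m2).
have s1 : (Nn 2 g1 <= U%:E * (Nn 4 ed * Nn 4 eu))%E.
  rewrite /g1 (L_scale (leb3 (R:=R)) _ _ (fun x => ed x * eu x)) //; last exact: measurable_funM.
  by apply: lee_wpmul2l; [rewrite lee_fin | exact: (L_holder (leb3 (R:=R)))].
have s2 : (Nn 2 g2 <= U%:E * (Nn 4 ev * Nn 4 ed))%E.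
  rewrite /g2 (L_scale (leb3 (R:=R)) _ _ (fun x => ev x * ed x)) //; last exact: measurable_funM.
  by apply: lee_wpmul2l; [rewrite lee_fin | exact: (L_holder (leb3 (R:=R)))].
have s3 : (Nn 2 g3 <= `|U - V|%:E * (Nn 4 ev * Nn 4 ev))%E.
  rewrite /g3 (L_scale (leb3 (R:=R)) _ _ (fun x => ev x * ev x)) //; last exact: measurable_funM.
  by apply: lee_wpmul2l; [rewrite lee_fin | exact: (L_holder (leb3 (R:=R)))].
apply: (le_trans step1); apply: (le_trans step2).
have [Dy|Dny] := eqVneq (Nn 4 ed) +oo%E.
  by rewrite Dy muleC gt0_mulye ?leey // lte_fin mulr_gt0.
have Dd := fin_of _ D0 (ltac:(by rewrite ltey)).
set d := fine (Nn 4 ed) in Dd.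
have d0 : 0 <= d by rewrite fine_ge0.
rewrite Dd Aa Bb in s1 s2 s3 AD.
rewrite -!EFinM in s1 s2 s3.
rewrite -!EFinD lee_fin in AD.
apply: le_trans; first exact: (leeD (leeD s1 s2) s3).
rewrite Dd -!EFinD -EFinM lee_fin UE VE.
apply: (@final R N hN) => //.
by rewrite lerBlDr.
Qed.

Lemma key2 (O : set (R3 R)) (mO : measurable O) (N : R) (hN : 0 < N)
  (u : R3 R -> 'rV[R]_3) : inL4 O u ->
  (L2mat O (fun x => (FN O N u *: tens (u x) (u x))%R) <= N%:E * L4vec O u)%E.
Proof.
move=> hu.
set U := FN O N u.
set u' := pat O u.
have mu' := @mpat O mO u hu.
set eu := fun x => eucl (u' x).
have meu : measurable_fun setT eu := meucl _ mu'.
have hA : L4vec O u = Nn 4 eu.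
  by apply: conv => // x; rewrite /eu /u' /pat; case: ifP => _ //; exact: eucl0.
have A0 : (0 <= Nn 4 eu)%E by apply: Lnorm_ge0.
have Aa := fin_of _ A0 (ltac:(rewrite -hA; by case: hu)).
set a := fine (Nn 4 eu) in Aa.
have a0 : 0 <= a by rewrite fine_ge0.
have UE : U = fN N a by rewrite /U /FN hA.
have U0 : 0 <= U by rewrite UE; exact: (@fN_ge0 R N hN a a0).
have hL : L2mat O (fun x => (U *: tens (u x) (u x))%R) =
   Nn 2 (fun x => U * (eu x * eu x)).
  rewrite /L2mat; apply: (@conv O 2) => // x.
  rewrite /eu /u' /pat; case: (x \in O).
    by rewrite frobZ frob_tens ger0_norm.
  by rewrite eucl0 mul0r mulr0.
rewrite hL hA (L_scale (leb3 (R:=R)) _ _ (fun x => eu x * eu x)) //; last first.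
  exact: measurable_funM.
have H : (Nn 2 (fun x => (eu x * eu x)%R) <= Nn 4 eu * Nn 4 eu)%E.
  by apply: (L_holder (leb3 (R:=R))).
have H2 : (U%:E * Nn 2 (fun x => (eu x * eu x)%R) <= U%:E * (Nn 4 eu * Nn 4 eu))%E.
  by apply: lee_wpmul2l; [rewrite lee_fin | exact: H].
apply: le_trans; first exact: H2.
rewrite Aa -!EFinM lee_fin mulrA UE.
apply: ler_wpM2r => //.
exact: (@fN_mul R N hN a a0).
Qed.

End Main.

Theorem lemma3p1 (R : realType) (Omega : set (R3 R)) (N : R)
  (hOpen : open Omega) (hConn : connected Omega) (hNe : Omega !=set0)
  (hBdd : bounded_set Omega) (hN : 0 < N) :
  forall u v : R3 R -> 'rV[R]_3, inL4 Omega u -> inL4 Omega v ->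
    (L2mat Omega (fun x => (FN Omega N u *: tens (u x) (u x) - FN Omega N v *: tens (v x) (v x))%R)
       <= (3 * N)%R%:E * L4vec Omega (fun x => (u x - v x)%R))%E /\
    (L2mat Omega (fun x => (FN Omega N u *: tens (u x) (u x))%R) <= N%:E * L4vec Omega u)%E.
Proof.
move=> u v hu hv.
have mO := @open_meas R Omega hOpen.
split; last exact: (@key2 R Omega mO N hN u hu).
have [ba|ab] := leP (fine (L4vec Omega v)) (fine (L4vec Omega u)).
  exact: (@key R Omega mO N hN u v hu hv ba).
have := @key R Omega mO N hN v u hv hu (ltW ab).
have -> : L2mat Omega (fun x => (FN Omega N v *: tens (v x) (v x) - FN Omega N u *: tens (u x) (u x))%R)
  = L2mat Omega (fun x => (FN Omega N u *: tens (u x) (u x) - FN Omega N v *: tens (v x) (v x))%R).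
  rewrite /L2mat; congr LpnormD; apply/funext => x.
  by rewrite -frobN opprB.
have -> : L4vec Omega (fun x => (v x - u x)%R) = L4vec Omega (fun x => (u x - v x)%R).
  rewrite /L4vec; congr LpnormD; apply/funext => x.
  by rewrite -euclN opprB.
by [].
Qed.
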